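(* Let $\beta$ be a Pisot number, let $l\in(-1,0]$, $r=l+1$, and let $d$ be the $(-\beta,l)$-expansion. Then $d(x)$ is eventually periodic for every $x\in[l,r)\cap\mathbb{Q}(\beta)$.
   Context: For $\beta>1$ and $l\in(-1,0]$, $r=l+1$, the $(-\beta,l)$-transformation is $T:[l,r)\to[l,r)$, $T(x)=-\beta x-\lfloor -\beta x-l\rfloor$. The $(-\beta,l)$-expansion of $x\in[l,r)$ is the integer sequence $d(x)=x_1x_2x_3\cdots$ with $x_i=\lfloor -\beta T^{i-1}(x)-l\rfloor$. A Pisot number is a real algebraic integer $>1$ all of whose other conjugates have modulus $<1$. *)

(* Defs.v *)
From HB Require Import structures.
From mathcomp Require Import all_boot all_order all_algebra.
From mathcomp Require Import reals.
From mathcomp.real_closed Require Import complex.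
Set Implicit Arguments. Unset Strict Implicit. Unset Printing Implicit Defensive.
Import Order.TTheory GRing.Theory Num.Theory.
Local Open Scope ring_scope.
Local Open Scope complex_scope.

Definition pisot (R : realType) (beta : R) : Prop :=
  1 < beta /\
  exists p : {poly int},
    p \is monic /\
    irreducible_poly (map_poly (intr : int -> rat) p) /\
    root (map_poly (intr : int -> R) p) beta /\
    forall z : R[i], root (map_poly (intr : int -> R[i]) p) z ->
      z != beta%:C -> `|z| < 1.

Definition in_Qbeta (R : realType) (beta x : R) : Prop :=
  exists p q : {poly rat},
    (map_poly (ratr : rat -> R) q).[beta] != 0 /\
    x = (map_poly (ratr : rat -> R) p).[beta] / (map_poly (ratr : rat -> R) q).[beta].

Definition negT (R : realType) (beta l x : R) : R :=
  - beta * x - (Num.floor (- beta * x - l))%:~R.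

(* The i-th digit (0-indexed: digit n is x_{n+1}) of the (-beta,l)-expansion:
   x_{n+1} = floor(-beta T^n(x) - l). *)
Definition negdigit (R : realType) (beta l x : R) (n : nat) : int :=
  Num.floor (- beta * iter n (negT beta l) x - l).

Definition eventually_periodic (u : nat -> int) : Prop :=
  exists N k : nat, (0 < k)%N /\ forall n : nat, (N <= n)%N -> u (n + k)%N = u n.

(* Main.v *)
Require Import Defs.
From HB Require Import structures.
From mathcomp Require Import all_boot all_order all_algebra.
From mathcomp Require Import separable.
From mathcomp Require Import reals.
From mathcomp.real_closed Require Import complex.
From mathcomp Require Import zify ring lra.
Import Order.TTheory GRing.Theory Num.Theory.
Local Open Scope ring_scope.

Lemma pigeon_poly (d N : nat) (B : nat -> {poly int}) :
  (forall n, size (B n) <= d)%N -> (forall n i, `|(B n)`_i| <= N%:Z) ->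
  exists i j, (i < j)%N /\ B i = B j.
Proof.
move=> hs hb.
pose F := {ffun 'I_d -> 'I_((N + N).+1)}.
pose enc (n : nat) : F := [ffun i : 'I_d => inord (absz ((B n)`_i + N%:Z))].
have key : forall m n, enc m = enc n -> B m = B n.
  move=> m n e; apply/polyP => i; case: (ltnP i d) => hi; last first.
    by rewrite !nth_default // (leq_trans (hs _) hi).
  have := congr1 (fun f : F => val (f (Ordinal hi))) e; rewrite !ffunE /=.
  have hm := hb m i; have hn := hb n i.
  move: hm hn; rewrite !ler_norml => /andP[hm1 hm2] /andP[hn1 hn2].
  have sh : forall a : int, - (N%:Z) <= a -> Posz (absz (a + N%:Z)) = a + N%:Z.
    by move=> a ha; rewrite gez0_abs //; lia.
  rewrite !inordK.
  - by move=> /(congr1 Posz); rewrite !sh // => /addIr.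
  - rewrite -ltz_nat sh //; move: hn2; set a := (B n)`_i; lia.
  - rewrite -ltz_nat sh //; move: hm2; set a := (B m)`_i; lia.
pose g (k : 'I_(#|F|.+1)) := enc k.
have : ~~ injectiveb g.
  apply/negP => /injectiveP inj; have := leq_card g inj.
  by rewrite card_ord ltnn.
case/injectivePn => a [b] neq eqab.
have := key _ _ eqab.
case: (ltngtP a b) => h e.
- by exists a, b.
- by exists b, a.
- by move: neq; rewrite (val_inj h) eqxx.
Qed.
Local Open Scope complex_scope.
Local Open Scope ring_scope.

Lemma normc_ge0 (R : rcfType) (x : R[i]) : 0 <= Normc.normc x.
Proof. by case: x => a b; rewrite /Normc.normc sqrtr_ge0. Qed.

Lemma normc_real (R : rcfType) (r : R) : Normc.normc (r%:C) = `|r|.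
Proof. by rewrite /Normc.normc /= expr0n addr0 sqrtr_sqr. Qed.

Lemma normc_int (R : rcfType) (k : int) : Normc.normc (k%:~R : R[i]) = (`|k|%:~R : R).
Proof.
have -> : (k%:~R : R[i]) = (k%:~R : R)%:C by rewrite rmorph_int.
by rewrite normc_real intr_norm.
Qed.

Lemma normc_sum (R : rcfType) n (F : 'I_n -> R[i]) :
  Normc.normc (\sum_i F i) <= \sum_i Normc.normc (F i).
Proof.
apply: (big_ind2 (fun x y => Normc.normc x <= y)) => //.
- by rewrite Normc.normc0.
- move=> a b c e h1 h2; apply: le_trans (le_normcD _ _) _; exact: lerD.
Qed.

Lemma coef_bound (R : realType) (d : nat) (rs : seq R[i]) (B : nat -> {poly int}) :
  uniq rs -> size rs = d -> (forall n, size (B n) <= d)%N ->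
  (forall z, z \in rs -> exists M : R, forall n,
      Normc.normc (map_poly (intr : int -> R[i]) (B n)).[z] <= M) ->
  exists N : nat, forall n i, `|(B n)`_i| <= N%:Z.
Proof.
move=> urs srs hs hM.
have /fin_all_exists [M hMj] : forall j : 'I_d, exists m : R, forall n,
    Normc.normc (map_poly (intr : int -> R[i]) (B n)).[rs`_j] <= m.
  by move=> j; apply: hM; rewrite mem_nth // srs.
pose a : 'rV[R[i]]_d := \row_(j < d) rs`_j.
pose V := Vandermonde d a.
have uV : V \in unitmx.
  rewrite unitmxE unitfE det_Vandermonde; apply/prodf_neq0 => i _.
  apply/prodf_neq0 => j hij; rewrite /a !mxE subr_eq0.
  by rewrite nth_uniq ?srs // neq_ltn hij orbT.
pose W := invmx V.
have M0 : forall j, 0 <= M j := fun j => le_trans (normc_ge0 _ _) (hMj j 0%N).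
pose G := \sum_(i < d) \sum_(j < d) M j * Normc.normc (W j i).
have G0 : forall i : 'I_d, \sum_(j < d) M j * Normc.normc (W j i) <= G.
  move=> i; rewrite /G [X in _ <= X](bigD1 i) //= lerDl sumr_ge0 // => k _.
  by rewrite sumr_ge0 // => j _; rewrite mulr_ge0 ?normc_ge0.
have Gge0 : 0 <= G.
  by rewrite sumr_ge0 // => k _; rewrite sumr_ge0 // => j _; rewrite mulr_ge0 ?normc_ge0.
exists (Num.bound G) => n i.
case: (ltnP i d) => hi; last by rewrite nth_default ?normr0 // (leq_trans (hs n) hi).
pose cv : 'rV[R[i]]_d := \row_(k < d) (((B n)`_k)%:~R).
have cvV : cv *m V = \row_(j < d) (map_poly (intr : int -> R[i]) (B n)).[rs`_j].
  apply/rowP => j; rewrite !mxE (horner_coef_wide _ (n:=d)); last first.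
    rewrite size_map_inj_poly //; exact: intr_inj.
  by apply: eq_bigr => k _; rewrite !mxE coef_map.
have e : cv = (cv *m V) *m W by rewrite /W mulmxK.
have := congr1 (fun m : 'rV[R[i]]_d => m 0 (Ordinal hi)) e; rewrite /= cvV !mxE.
under eq_bigr do rewrite mxE.
move=> ek.
have : (`|(B n)`_i|%:~R : R) < (Num.bound G)%:R.
  rewrite -normc_int ek; apply: (le_lt_trans (normc_sum _ _ _)).
  apply: (le_lt_trans _ (archi_boundP Gge0)).
  apply: le_trans (G0 (Ordinal hi)).
  apply: ler_sum => j _; rewrite Normc.normcM ler_wpM2r ?normc_ge0 //.
by rewrite pmulrn ltr_int => /ltW.
Qed.

Lemma irr_sep (q : {poly rat}) : irreducible_poly q -> separable_poly q.
Proof.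
move=> [hs hirr].
have q0 : q != 0 by rewrite -size_poly_gt0; apply: ltnW.
have d0 : q^`() != 0.
  apply/eqP => h; have := congr1 (fun r : {poly rat} => r`_((size q).-2)) h.
  rewrite /= coef_deriv coef0.
  have -> : ((size q).-2).+1 = (size q).-1 by move: hs; case: (size q) => [|[|k]].
  move/eqP; rewrite mulrn_eq0 -lead_coefE lead_coef_eq0 (negbTE q0) orbF.
  by move: hs; case: (size q) => [|[|k]].
rewrite unlock /coprimep; apply/negPn/negP => hg.
have := hirr _ hg (dvdp_gcdl q q^`()) => /andP[_ hq].
have hqd := dvdp_trans hq (dvdp_gcdr q q^`()).
have := dvdp_leq d0 hqd; have := lt_size_deriv q0.
by move=> h1 h2; have := leq_trans h1 h2; rewrite ltnn.
Qed.

Lemma roots_C (R : rcfType) (p : {poly int}) : p \is monic ->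
  irreducible_poly (map_poly (intr : int -> rat) p) ->
  exists rs : seq R[i], [/\ uniq rs, size rs = (size p).-1 &
     forall z, root (map_poly (intr : int -> R[i]) p) z = (z \in rs)].
Proof.
move=> mp hirr.
set pC := map_poly (intr : int -> R[i]) p.
have [rs hrs] := closed_field_poly_normal pC.
have mC : pC \is monic by apply: monic_map.
rewrite (monicP mC) scale1r in hrs.
exists rs; split.
- have hpC : pC = map_poly (ratr : rat -> R[i]) (map_poly intr p).
    by rewrite -map_poly_comp; apply: eq_map_poly => k /=; rewrite ratr_int.
  have : separable_poly pC by rewrite hpC separable_map; exact: irr_sep.
  by rewrite hrs separable_prod_XsubC.
- have := congr1 (fun r : {poly R[i]} => size r) hrs.
  rewrite /= size_prod_XsubC size_map_inj_poly //; last exact: intr_inj.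
  by move=> ->.
- by move=> z; rewrite hrs root_prod_XsubC.
Qed.

Lemma mod_eval (S : comNzRingType) (p A : {poly int}) (z : S) : p \is monic ->
  root (map_poly (intr : int -> S) p) z ->
  (map_poly (intr : int -> S) (A %% p)).[z] = (map_poly intr A).[z].
Proof.
move=> mp /eqP hz.
rewrite [in RHS](Pdiv.IdomainMonic.divp_eq mp A) rmorphD rmorphM /=.
by rewrite hornerD hornerM hz mulr0 add0r.
Qed.

Lemma map_real (R : rcfType) (A : {poly int}) (r : R) :
  (map_poly (intr : int -> R[i]) A).[r%:C] = ((map_poly (intr : int -> R) A).[r])%:C.
Proof.
have -> : map_poly (intr : int -> R[i]) A = map_poly (real_complex R) (map_poly intr A).
  by rewrite -map_poly_comp; apply: eq_map_poly => k /=; rewrite rmorph_int.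
by rewrite horner_map.
Qed.

Lemma clear_den (P : {poly rat}) : exists (D : int) (P' : {poly int}),
  D != 0 /\ map_poly (intr : int -> rat) P' = D%:~R *: P.
Proof.
elim/poly_ind: P => [|P c [D [P' [hD hP]]]].
  by exists 1, 0; rewrite rmorph0 scaler0.
exists (D * denq c), (P' * (denq c)%:P * 'X + (numq c * D)%:P); split.
  by rewrite mulf_neq0 // denq_neq0.
rewrite rmorphD !rmorphM /= map_polyX !map_polyC hP /= numqE.
rewrite -!mul_polyC !polyCM; ring.
Qed.

Lemma normcC (R : rcfType) (z : R[i]) : `|z| = (Normc.normc z)%:C.
Proof. by rewrite normc_def; case: z. Qed.

Fixpoint Bseq (p P Q : {poly int}) (c : nat -> int) (n : nat) : {poly int} :=
  if n is m.+1 then (- ('X * Bseq p P Q c m) - (c m)%:P * Q) %% p else P %% p.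

Lemma Bseq_step (S : comNzRingType) p P Q c n (z : S) : p \is monic ->
  root (map_poly (intr : int -> S) p) z ->
  (map_poly (intr : int -> S) (Bseq p P Q c n.+1)).[z] =
  - z * (map_poly intr (Bseq p P Q c n)).[z] - (c n)%:~R * (map_poly intr Q).[z].
Proof.
move=> mp hz; rewrite /= mod_eval // rmorphB rmorphN !rmorphM /= map_polyX map_polyC /=.
by rewrite hornerD hornerN !hornerM hornerX hornerN hornerM hornerC; ring.
Qed.

Lemma negT_range (R : realType) (beta l z : R) : l <= negT beta l z < l + 1.
Proof.
rewrite /negT; have := floor_itv (- beta * z - l).
set f := Num.floor _; rewrite intrD => /andP[h1 h2].
apply/andP; split; lra.
Qed.

Lemma digit_bound (R : realType) (beta l y : R) : 1 < beta -> -1 < l -> l <= 0 ->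
  l <= y < l + 1 -> `|(Num.floor (- beta * y - l))%:~R : R| <= beta + 2.
Proof.
move=> hb hl1 hl0 /andP[hy1 hy2].
have := floor_itv (- beta * y - l).
set f := Num.floor _; rewrite intrD => /andP[h1 h2].
have hby1 : - beta * y <= beta by nra.
have hby2 : - beta <= - beta * y by nra.
rewrite ler_norml; apply/andP; split; lra.
Qed.

Local Close Scope complex_scope.

Theorem mainTheorem7 (R : realType) (beta l : R) :
  pisot beta -> -1 < l -> l <= 0 ->
  forall x : R, l <= x -> x < l + 1 -> in_Qbeta beta x ->
  eventually_periodic (negdigit beta l x).
Proof.
move=> [hb1 [p [mp [hirr [hrb hsmall]]]]] hl1 hl0 x hlx hxr [P0 [Q0 [hQ0 hx]]].
have [DP [P' [hDP hP']]] := clear_den P0.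
have [DQ [Q' [hDQ hQ']]] := clear_den Q0.
have ev : forall (D : int) (A' : {poly int}) (A0 : {poly rat}),
    map_poly (intr : int -> rat) A' = D%:~R *: A0 ->
    (map_poly (intr : int -> R) A').[beta] = D%:~R * (map_poly (ratr : rat -> R) A0).[beta].
  move=> D A' A0 hA.
  have <- : map_poly (ratr : rat -> R) (map_poly intr A') = map_poly intr A'.
    by rewrite -map_poly_comp; apply: eq_map_poly => k /=; rewrite ratr_int.
  by rewrite hA linearZ /= hornerZ ratr_int.
pose P := P' * (DQ%:P).
pose Q := Q' * (DP%:P).
pose Qb := (map_poly (intr : int -> R) Q).[beta].
have eQb : Qb = DQ%:~R * (map_poly (ratr : rat -> R) Q0).[beta] * DP%:~R.
  by rewrite /Qb /Q rmorphM /= map_polyC hornerM hornerC (ev _ _ _ hQ').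
have Qb0 : Qb != 0.
  by rewrite eQb !mulf_neq0 // intr_eq0.
have eP : (map_poly (intr : int -> R) P).[beta] = x * Qb.
  rewrite /P rmorphM /= map_polyC hornerM hornerC (ev _ _ _ hP') eQb hx.
  have hDP' : (DP%:~R : R) != 0 by rewrite intr_eq0.
  have hDQ' : (DQ%:~R : R) != 0 by rewrite intr_eq0.
  by field.
pose y n := iter n (negT beta l) x.
pose c n := negdigit beta l x n.
have hy : forall n, l <= y n < l + 1.
  by case=> [|n]; [rewrite /= hlx hxr | exact: negT_range].
have hstep : forall n, y n.+1 = - beta * y n - (c n)%:~R by [].
pose B := Bseq p P Q c.
have hrbR : root (map_poly (intr : int -> R) p) beta by [].
have hB : forall n, (map_poly (intr : int -> R) (B n)).[beta] = y n * Qb.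
  elim=> [|n IH]; first by rewrite /B /= mod_eval.
  by rewrite /B Bseq_step // -/B IH hstep -/Qb; ring.
have p0 : p != 0 by apply: monic_neq0.
have hsize : forall n, (size (B n) <= (size p).-1)%N.
  move=> n; rewrite -ltnS prednK ?size_poly_gt0 //.
  by case: n => [|n]; rewrite /B /= ltn_modpN0.
have hc : forall n, `|(c n)%:~R : R| <= beta + 2.
  by move=> n; rewrite /c /negdigit; apply: digit_bound => //; exact: hy.
have [rs [urs srs hroots]] := @roots_C R p mp hirr.
have hM : forall z, z \in rs -> exists M : R, forall n,
    Normc.normc (map_poly (intr : int -> R[i]) (B n)).[z] <= M.
  move=> z; rewrite -hroots => hz.
  case: (eqVneq z beta%:C%C) => [-> | hzb].
    exists `|Qb| => n; rewrite map_real hB normc_real normrM.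
    have := hy n => /andP[h1 h2].
    by rewrite ler_piMl // ler_norml; apply/andP; split; lra.
  have hz1 := hsmall z hz hzb.
  have nz1 : Normc.normc z < 1 by move: hz1; rewrite normcC -ltcR.
  have nz0 := normc_ge0 _ z.
  set nB := Normc.normc (map_poly (intr : int -> R[i]) (B 0%N)).[z].
  set nQ := Normc.normc (map_poly (intr : int -> R[i]) Q).[z].
  have nB0 : 0 <= nB by apply: normc_ge0.
  have nQ0 : 0 <= nQ by apply: normc_ge0.
  pose w := (beta + 2) * nQ / (1 - Normc.normc z).
  have hw : (1 - Normc.normc z) * w = (beta + 2) * nQ.
    rewrite /w; field; rewrite subr_eq0; apply/eqP => h; move: nz1; rewrite -h; lra.
  exists (nB + w); elim=> [|n IH]; first by rewrite lerDl /w divr_ge0 ?mulr_ge0; lra.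
  rewrite /B Bseq_step // -/B.
  apply: le_trans (le_normcD _ _) _.
  rewrite normcN !Normc.normcM normcN normc_int intr_norm -/nQ.
  have := ler_wpM2l nz0 IH; have := ler_wpM2r nQ0 (hc n).
  nra.
have [N hN] := @coef_bound R _ rs B urs srs hsize hM.
have [i [j [hij eB]]] := pigeon_poly _ _ _ hsize hN.
have eyij : y i = y j.
  by apply: (mulIf Qb0); rewrite -!hB eB.
exists i, (j - i)%N; split; first by rewrite subn_gt0.
move=> n hn; rewrite /negdigit.
have -> : iter (n + (j - i)) (negT beta l) x = iter n (negT beta l) x.
  have -> : (n + (j - i) = (n - i) + j)%N by lia.
  rewrite iterD -/(y j) -eyij /y -iterD.
  by congr iter; lia.
by [].
Qed.
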